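(* Let $u>0$ and suppose there is an open set $S\ni\theta_i$ with $\sup_{\theta\in S}E_\theta|X_{i,t}|^p<\infty$ for some $p>u$. Then for every $k\in\mathbb N_0$, $$\sup_{\theta\in S}m_\theta^{(k)}(u)=\sup_{\theta\in S}\frac1{\sqrt{2\pi}}\sum_{n=0}^\infty\exp\Big(-\frac{Q_n(\theta)^2}{2u}\Big)|Q_n(\theta)|^k<\infty.$$
   Context: $X_{i,t}$ is an $\mathbb N_0$-valued random variable with distribution depending on $\theta\in\mathbb R^{K_i}$, $C_n(\theta)=P_\theta[X_{i,t}\le n]$, $Q_n(\theta)=\Phi^{-1}(C_n(\theta))$ with $\Phi$ the standard normal CDF; summands with $Q_n(\theta)=\pm\infty$ are interpreted as $0$. *)

(* Defs.v *)
From Stdlib Require Fin.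
From Stdlib Require Import Reals Lra ClassicalEpsilon.
From Coquelicot Require Import Coquelicot.
Open Scope R_scope.

Definition param (K : nat) := Fin.t K -> R.

(* Open subset of R^K (sup-norm balls; equivalent to Euclidean topology). *)
Definition is_open_param {K : nat} (S : param K -> Prop) : Prop :=
  forall th, S th -> exists eps, 0 < eps /\
    forall th', (forall i, Rabs (th' i - th i) < eps) -> S th'.

Definition Phi (x : R) : R :=
  / sqrt (2 * PI) * RInt_gen (fun t => exp (- t ^ 2 / 2)) (Rbar_locally m_infty) (at_point x).

Definition Phi_inv (c : R) : R :=
  epsilon (inhabits 0) (fun x => Phi x = c).

Definition is_pmf_family {K : nat} (P : param K -> nat -> R) : Prop :=
  forall th, (forall n, 0 <= P th n) /\ is_series (P th) 1.

Definition Ccdf {K : nat} (P : param K -> nat -> R) (th : param K) (n : nat) : R :=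
  sum_f_R0 (P th) n.

(* Q_n(theta) = Phi^{-1}(C_n(theta)); meaningful (finite) iff 0 < C_n < 1 *)
Definition Qn {K : nat} (P : param K -> nat -> R) (th : param K) (n : nat) : R :=
  Phi_inv (Ccdf P th n).

(* Summand of m_theta^(k)(u); terms with Q_n = +-oo (C_n in {0,1}) are 0 *)
Definition m_term {K : nat} (P : param K -> nat -> R) (u : R) (k : nat)
    (th : param K) (n : nat) : R :=
  if Rlt_dec 0 (Ccdf P th n) then
    if Rlt_dec (Ccdf P th n) 1 then
      / sqrt (2 * PI) * (exp (- (Qn P th n) ^ 2 / (2 * u)) * Rabs (Qn P th n) ^ k)
    else 0
  else 0.

Definition rpow (x p : R) : R := if Req_EM_T x 0 then 0 else Rpower x p.

Definition moment_term {K : nat} (P : param K -> nat -> R) (p : R)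
    (th : param K) (n : nat) : R :=
  rpow (INR n) p * P th n.

(* Main.v *)
Require Import Defs.
From Stdlib Require Import Reals Lra Psatz FunctionalExtensionality ClassicalEpsilon.
From Coquelicot Require Import Coquelicot.
Open Scope R_scope.

Definition gf (t : R) : R := exp (- t ^ 2 / 2).
Definition GF (x : R) : R := RInt gf 0 x.
Definition gg (x s : R) : R := exp (- x ^ 2 * (1 + s ^ 2) / 2) / (1 + s ^ 2).
Definition GG (x : R) : R := RInt (gg x) 0 1.

Lemma gf_cont x : continuous gf x.
Proof.
  apply (@ex_derive_continuous R_AbsRing R_NormedModule). unfold gf. auto_derive. auto.
Qed.

Lemma gf_exRInt a b : ex_RInt gf a b.
Proof. apply (@ex_RInt_continuous R_CompleteNormedModule); intros; apply gf_cont. Qed.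

Lemma GF_deriv x : is_derive GF x (gf x).
Proof.
  apply (is_derive_RInt gf GF 0 x).
  - apply filter_forall. intros y. apply (@RInt_correct R_CompleteNormedModule), gf_exRInt.
  - apply gf_cont.
Qed.

Lemma gg_pos (s:R) : 0 < 1 + s ^ 2.
Proof. nra. Qed.

Lemma gg_cont x s : continuous (gg x) s.
Proof.
  apply (@ex_derive_continuous R_AbsRing R_NormedModule). unfold gg. auto_derive.
  pose proof (gg_pos s). lra.
Qed.

Lemma gg_d x s : is_derive (fun u => gg u s) x (- x * exp (- x ^ 2 * (1 + s ^ 2) / 2)).
Proof.
  unfold gg. auto_derive. pose proof (gg_pos s); lra. replace (- (x*(x*1)) * (1 + s*(s*1)) * /2) with (- x ^ 2 * (1 + s ^ 2) / 2) by (simpl; field). simpl. field. pose proof (gg_pos s). lra.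
Qed.

Lemma Dgg x s : Derive (fun u => gg u s) x = - x * exp (- x ^ 2 * (1 + s ^ 2) / 2).
Proof. apply is_derive_unique, gg_d. Qed.

Lemma gg_exRInt x a b : ex_RInt (gg x) a b.
Proof. apply (@ex_RInt_continuous R_CompleteNormedModule); intros; apply gg_cont. Qed.

Lemma cont2d_Dgg x t : continuity_2d_pt (fun u v => Derive (fun z => gg z v) u) x t.
Proof.
  apply continuity_2d_pt_ext with (fun u v => (- u) * exp (- (u*u) * (1 + v*v) * / 2)).
  { intros u v. rewrite Dgg. f_equal. f_equal. simpl. field. }
  apply continuity_2d_pt_mult.
  - apply continuity_2d_pt_opp, continuity_2d_pt_id1.
  - apply continuity_1d_2d_pt_comp.
    + apply derivable_continuous_pt, derivable_pt_exp.
    + apply continuity_2d_pt_mult; [apply continuity_2d_pt_mult|apply continuity_2d_pt_const].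
      * apply continuity_2d_pt_opp, continuity_2d_pt_mult; apply continuity_2d_pt_id1.
      * apply continuity_2d_pt_plus; [apply continuity_2d_pt_const|].
        apply continuity_2d_pt_mult; apply continuity_2d_pt_id2.
Qed.

Lemma gg_aux (x t : R) : - x * exp (- x ^ 2 * (1 + t ^ 2) / 2) = - gf x * (x * gf (x*t+0)).
Proof. unfold gf. replace (- x ^ 2 * (1 + t ^ 2) / 2) with ((- x ^ 2 / 2) + (- (x * t + 0) ^ 2 / 2)) by field.
  rewrite exp_plus. ring. Qed.

Lemma GG_deriv (x : R) : is_derive GG x (- gf x * GF x).
Proof.
  unfold GG.
  assert (H := is_derive_RInt_param gg 0 1 x).
  replace (- gf x * GF x) with (RInt (fun t => Derive (fun u => gg u t) x) 0 1).
  - apply H.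
    + apply filter_forall. intros y t _. eexists. apply gg_d.
    + intros t _. apply cont2d_Dgg.
    + apply filter_forall. intros y. apply gg_exRInt.
  - rewrite (RInt_ext _ (fun t => scal (- gf x) (scal x (gf (x * t + 0))))).
    + rewrite (RInt_scal (V:=R_CompleteNormedModule)).
      * rewrite (RInt_comp_lin (V:=R_CompleteNormedModule)).
        -- unfold GF. assert (E0 : x*0+0 = 0) by (simpl; ring). assert (E1 : x*1+0 = x) by (simpl;ring).
           simpl in *. rewrite E0, E1. reflexivity.
        -- apply gf_exRInt.
      * apply (ex_RInt_ext (V:=R_CompleteNormedModule) (fun t => x * gf (x * t + 0))).
        { intros; reflexivity. }
        apply (@ex_RInt_continuous R_CompleteNormedModule). intros z _.
        apply (@ex_derive_continuous R_AbsRing R_NormedModule). unfold gf. auto_derive. auto.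
    + intros t _. rewrite Dgg.
      rewrite gg_aux. reflexivity.
Qed.

Definition hh (x : R) : R := GF x ^ 2 + 2 * GG x.

Lemma hh_deriv (x : R) : is_derive hh x 0.
Proof.
  unfold hh.
  assert (H1 := is_derive_pow GF 2 x _ (GF_deriv x)).
  assert (H2 := is_derive_scal GG x 2 _ (GG_deriv x)).
  assert (H := is_derive_plus (K:=R_AbsRing) (V:=R_NormedModule) _ _ x _ _ H1 H2).
  simpl in H. unfold plus in H. simpl in H.
  replace 0 with (INR 2 * gf x * (GF x * 1) + 2 * (- gf x * GF x)).
  exact H. simpl. ring.
Qed.

Lemma GF0 : GF 0 = 0.
Proof. unfold GF. apply (RInt_point (V:=R_CompleteNormedModule)). Qed.

Lemma GG0 : GG 0 = PI / 4.
Proof.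
  unfold GG. rewrite <- atan_1. replace (atan 1) with (atan 1 - atan 0) by (rewrite atan_0; ring).
  apply (is_RInt_unique (V:=R_CompleteNormedModule)).
  apply (is_RInt_ext (V:=R_CompleteNormedModule) (fun s => / (1 + s ^ 2))).
  { intros s _. unfold gg. replace (- 0 ^ 2 * (1 + s ^ 2) / 2) with 0 by field. rewrite exp_0. unfold Rdiv. rewrite Rmult_1_l. reflexivity. }
  apply (is_RInt_derive (V:=R_CompleteNormedModule) atan).
  - intros t _. apply is_derive_Reals. apply derivable_pt_lim_atan.
  - intros t _. apply (@ex_derive_continuous R_AbsRing R_NormedModule). auto_derive. pose proof (gg_pos t). lra.
Qed.

Lemma hh_const (x : R) : hh x = PI / 2.
Proof.
  assert (h0 : hh 0 = PI / 2).
  { unfold hh. rewrite GF0, GG0. field. }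
  rewrite <- h0.
  destruct (Rtotal_order x 0) as [Hx|[Hx|Hx]].
  - apply (eq_is_derive (V:=R_NormedModule)); [|exact Hx]. intros t _. apply hh_deriv.
  - subst; reflexivity.
  - symmetry. apply (eq_is_derive (V:=R_NormedModule)); [|exact Hx]. intros t _. apply hh_deriv.
Qed.

Lemma exp_mono x y : x <= y -> exp x <= exp y.
Proof. intros H. destruct (Rle_lt_or_eq_dec _ _ H) as [H'|H']; [apply Rlt_le, exp_increasing; exact H'|subst; lra]. Qed.

Lemma gf_pos x : 0 < gf x.
Proof. apply exp_pos. Qed.

Lemma GG_bounds x : 0 <= GG x <= gf x.
Proof.
  unfold GG. split.
  - apply RInt_ge_0; [lra|apply gg_exRInt|]. intros s _. unfold gg.
    apply Rlt_le, Rdiv_lt_0_compat; [apply exp_pos|apply gg_pos].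
  - replace (gf x) with (RInt (fun _ => gf x) 0 1).
    + apply RInt_le; [lra|apply gg_exRInt| |].
      * apply (ex_RInt_const (V:=R_CompleteNormedModule)).
      * intros s Hs. unfold gg, gf. pose proof (gg_pos s).
        apply Rle_trans with (exp (- x ^ 2 * (1 + s ^ 2) / 2)).
        -- unfold Rdiv at 1. rewrite <- (Rmult_1_r (exp _)) at 2. apply Rmult_le_compat_l.
           apply Rlt_le, exp_pos. assert (Hi : / (1 + s ^ 2) * (1 + s ^ 2) = 1) by (field; lra). assert (0 < / (1 + s ^ 2)) by (apply Rinv_0_lt_compat; lra). nra.
        -- apply exp_mono. pose proof (pow2_ge_0 x). pose proof (pow2_ge_0 s). nra.
    + rewrite (RInt_const (V:=R_CompleteNormedModule)). unfold scal; simpl; unfold mult; simpl. ring.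
Qed.

Definition s0 : R := sqrt (PI / 2).

Lemma PI2_pos : 0 < PI / 2.
Proof. pose proof PI_RGT_0. lra. Qed.

Lemma s0_pos : 0 < s0.
Proof. unfold s0. apply sqrt_lt_R0, PI2_pos. Qed.

Lemma s0_sq : s0 * s0 = PI / 2.
Proof. unfold s0. apply sqrt_sqrt. pose proof PI2_pos; lra. Qed.

Lemma GF_sq x : GF x * GF x = PI / 2 - 2 * GG x.
Proof. pose proof (hh_const x). unfold hh in H. simpl in H. lra. Qed.

Lemma GF_chasles a b : GF b - GF a = RInt gf a b.
Proof.
  unfold GF. rewrite <- (RInt_Chasles (V:=R_CompleteNormedModule) gf 0 a b); try apply gf_exRInt.
  unfold plus; simpl. ring.
Qed.

Lemma GF_mono a b : a <= b -> GF a <= GF b.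
Proof.
  intros H. cut (0 <= GF b - GF a); [lra|]. rewrite GF_chasles.
  apply RInt_ge_0; [exact H|apply gf_exRInt|]. intros; apply Rlt_le, gf_pos.
Qed.

Lemma GF_le x : GF x <= s0.
Proof.
  pose proof (GF_sq x). pose proof (GG_bounds x). pose proof s0_sq. pose proof s0_pos. nra.
Qed.

Lemma GF_ge x : - s0 <= GF x.
Proof.
  pose proof (GF_sq x). pose proof (GG_bounds x). pose proof s0_sq. pose proof s0_pos. nra.
Qed.

Lemma sqrt_aux y d a : 0 <= y -> 0 <= d -> y * y + d = a -> sqrt a <= y + sqrt d.
Proof.
  intros Hy Hd Ha. pose proof (sqrt_pos d). pose proof (sqrt_sqrt d Hd).
  rewrite <- (sqrt_square (y + sqrt d)) by lra.
  apply sqrt_le_1_alt. nra.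
Qed.

Lemma GF_tail_pos x : 0 <= x -> s0 - GF x <= sqrt (2 * gf x).
Proof.
  intros Hx. pose proof (GF_mono 0 x Hx). rewrite GF0 in H. pose proof (GG_bounds x).
  apply Rle_trans with (sqrt (2 * GG x)).
  - unfold s0. cut (sqrt (PI/2) <= GF x + sqrt (2 * GG x)); [lra|].
    apply sqrt_aux; [lra|lra|]. pose proof (GF_sq x). lra.
  - apply sqrt_le_1_alt. lra.
Qed.

Lemma GF_tail_neg x : x <= 0 -> s0 + GF x <= sqrt (2 * gf x).
Proof.
  intros Hx. pose proof (GF_mono x 0 Hx). rewrite GF0 in H. pose proof (GG_bounds x).
  apply Rle_trans with (sqrt (2 * GG x)).
  - unfold s0. cut (sqrt (PI/2) <= - GF x + sqrt (2 * GG x)); [lra|].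
    apply sqrt_aux; [lra|lra|]. pose proof (GF_sq x). lra.
  - apply sqrt_le_1_alt. lra.
Qed.

Lemma gf_small eps : 0 < eps -> exists M, 0 < M /\ forall x, M <= Rabs x -> sqrt (2 * gf x) < eps.
Proof.
  intros He. assert (Hm : 0 < 2/eps) by (apply Rdiv_lt_0_compat; lra).
  exists (2 / eps + 1). split; [lra|].
  intros x Hx.
  assert (Hy : 2 + eps <= Rabs x * eps).
  { replace (2 + eps) with ((2/eps + 1) * eps) by (field; lra). apply Rmult_le_compat_r; lra. }
  assert (Ht : x * x = Rabs x * Rabs x) by (rewrite <- Rabs_mult; rewrite Rabs_right; [ring| nra]).
  set (E := exp (x ^ 2 / 2)).
  assert (HE1 : 1 + x ^ 2 / 2 <= E) by apply exp_ineq1_le.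
  assert (HE2 : gf x * E = 1).
  { unfold gf, E. rewrite <- exp_plus. replace (- x ^ 2 / 2 + x ^ 2 / 2) with 0 by field. apply exp_0. }
  pose proof (gf_pos x).
  assert (H2 : 2 * gf x < eps * eps).
  { assert (Rabs x * eps * (Rabs x * eps) >= 4) by nra.
    assert (E * (eps * eps) > 2) by (simpl in HE1; nra). nra. }
  rewrite <- (sqrt_square eps) by lra. apply sqrt_lt_1_alt. lra.
Qed.

Lemma GF_lim_m : filterlim GF (Rbar_locally m_infty) (locally (- s0)).
Proof.
  intros P [eps HP]. destruct (gf_small eps (cond_pos eps)) as [M [HM HM2]].
  exists (- M). intros y Hy. apply HP.
  unfold ball; simpl; unfold AbsRing_ball, abs, minus, plus, opp; simpl.
  assert (Hy0 : y <= 0) by lra.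
  pose proof (GF_tail_neg y Hy0). pose proof (GF_ge y).
  assert (M <= Rabs y) by (rewrite Rabs_left; lra).
  specialize (HM2 y H1).
  rewrite Rabs_right by lra. lra.
Qed.

Lemma DGF : Derive GF = gf.
Proof. apply functional_extensionality. intros x. apply is_derive_unique, GF_deriv. Qed.

Lemma Phi_eq x : Phi x = GF x / (2 * s0) + / 2.
Proof.
  assert (H : is_RInt_gen gf (Rbar_locally m_infty) (at_point x) (GF x - - s0)).
  { rewrite <- DGF. apply is_RInt_gen_Derive.
    - apply Filter_prod with (fun _ => True) (fun _ => True).
      + apply filter_true. + exact I.
      + intros a b _ _ t _. eexists; apply GF_deriv.
    - apply Filter_prod with (fun _ => True) (fun _ => True).
      + apply filter_true. + exact I.
      + intros a b _ _ t _. rewrite DGF. apply gf_cont.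
    - apply GF_lim_m.
    - intros P HP. apply locally_singleton in HP. exact HP. }
  unfold Phi. change (fun t : R => exp (- t ^ 2 / 2)) with gf. rewrite (is_RInt_gen_unique (V:=R_CompleteNormedModule) _ _ H).
  assert (Hs : sqrt (2 * PI) = 2 * s0).
  { unfold s0. replace (2 * PI) with (4 * (PI/2)) by field. rewrite sqrt_mult by (pose proof PI2_pos; lra).
    replace 4 with (2*2) by ring. rewrite sqrt_square by lra. ring. }
  rewrite Hs. pose proof s0_pos. field. lra.
Qed.

Lemma Phi_fun : Phi = fun x => GF x / (2 * s0) + / 2.
Proof. apply functional_extensionality, Phi_eq. Qed.

Lemma GF_cont x : continuous GF x.
Proof. apply (@ex_derive_continuous R_AbsRing R_NormedModule). eexists; apply GF_deriv. Qed.

Lemma Phi_cont x : continuous Phi x.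
Proof.
  rewrite Phi_fun. apply (@ex_derive_continuous R_AbsRing R_NormedModule).
  auto_derive. eexists; apply GF_deriv.
Qed.

Lemma Phi_inv_spec c : 0 < c < 1 -> Phi (Phi_inv c) = c.
Proof.
  intros Hc. unfold Phi_inv. apply epsilon_spec.
  pose proof s0_pos as Hs.
  destruct (gf_small (2 * s0 * Rmin c (1 - c))) as [M [HM HM2]].
  { apply Rmult_lt_0_compat; [lra|]. apply Rmin_glb_lt; lra. }
  assert (Hmin1 := Rmin_l c (1 - c)). assert (Hmin2 := Rmin_r c (1 - c)).
  assert (Ha : Phi (- M) <= c).
  { rewrite Phi_eq. assert (- M <= 0) by lra. pose proof (GF_tail_neg (- M) H).
    assert (M <= Rabs (- M)) by (rewrite Rabs_left; lra). specialize (HM2 _ H1).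
    apply (Rmult_le_reg_l (2 * s0)); [lra|]. field_simplify; [|lra]. nra. }
  assert (Hb : c <= Phi M).
  { rewrite Phi_eq. assert (0 <= M) by lra. pose proof (GF_tail_pos M H).
    assert (M <= Rabs M) by (rewrite Rabs_right; lra). specialize (HM2 _ H1).
    apply (Rmult_le_reg_l (2 * s0)); [lra|]. field_simplify; [|lra]. nra. }
  destruct (IVT_gen_consistent Phi (- M) M c Phi_cont) as [x [_ Hx]].
  { split; [apply Rle_trans with (Phi (- M)); [apply Rmin_l|lra] | apply Rle_trans with (Phi M); [lra|apply Rmax_r]]. }
  exists x; exact Hx.
Qed.

Lemma sum_ge_last (f : nat -> R) k : (forall n, 0 <= f n) -> f k <= sum_f_R0 f k.
Proof.
  intros H. destruct k; simpl. lra. pose proof (cond_pos_sum f k H). lra.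
Qed.

Lemma pow_le_fact_exp y k : 0 <= y -> y ^ k <= INR (Factorial.fact k) * exp y.
Proof.
  intros Hy. pose proof (exp_ge_taylor y k Hy).
  assert (Hf : 0 < INR (Factorial.fact k)) by (apply INR_fact_lt_0).
  assert (H2 : y ^ k / INR (Factorial.fact k) <= sum_f_R0 (fun j => y ^ j / INR (Factorial.fact j)) k).
  { apply (sum_ge_last (fun j => y ^ j / INR (Factorial.fact j))). intros n.
    apply Rle_mult_inv_pos; [apply pow_le; lra | apply INR_fact_lt_0]. }
  assert (y ^ k / INR (Factorial.fact k) <= exp y) by lra.
  unfold Rdiv in H0. apply (Rmult_le_compat_l (INR (Factorial.fact k))) in H0; [|lra].
  rewrite <- Rmult_assoc, (Rmult_comm _ (y ^ k)), Rmult_assoc, Rinv_r in H0; lra.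
Qed.

Lemma gf_step x : 0 <= x -> gf (x + 1) <= GF (x + 1) - GF x.
Proof.
  intros Hx. rewrite GF_chasles.
  replace (gf (x + 1)) with (RInt (fun _ => gf (x + 1)) x (x + 1)).
  - apply RInt_le; [lra| apply (ex_RInt_const (V:=R_CompleteNormedModule)) | apply gf_exRInt |].
    intros t Ht. unfold gf. apply exp_mono. nra.
  - rewrite (RInt_const (V:=R_CompleteNormedModule)). unfold scal; simpl; unfold mult; simpl. ring.
Qed.

Lemma tail_lower x : 0 <= x -> gf (x + 1) / (2 * s0) <= 1 - Phi x.
Proof.
  intros Hx. rewrite Phi_eq. pose proof (gf_step x Hx). pose proof (GF_le (x + 1)). pose proof s0_pos.
  apply (Rmult_le_reg_l (2 * s0)); [lra|]. field_simplify; lra.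
Qed.

Lemma key_bound u r k : 0 < u -> 0 < r -> r * u < 1 -> exists A, 0 <= A /\
  forall x, 0 < 1 - Phi x -> exp (- x ^ 2 / (2 * u)) * Rabs x ^ k <= A * Rpower (1 - Phi x) r.
Proof.
  intros Hu Hr Hru.
  set (d := / u - r).
  assert (Hd : 0 < d).
  { unfold d. assert (r < / u). { apply (Rmult_lt_reg_r u); [lra|]. rewrite Rinv_l; lra. } lra. }
  set (b := (1 + r) / d).
  set (E := b * (1 + r) / 2 + r / 2).
  pose proof s0_pos as Hs.
  set (kf := INR (Factorial.fact k)).
  assert (Hkf : 0 < kf) by (apply INR_fact_lt_0).
  set (A1 := kf * exp (u / 2 - r * ln (/ 2))).
  set (A2 := kf * exp (E + r * ln (2 * s0))).
  assert (HA1 : 0 < A1) by (apply Rmult_lt_0_compat; [lra|apply exp_pos]).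
  assert (HA2 : 0 < A2) by (apply Rmult_lt_0_compat; [lra|apply exp_pos]).
  exists (A1 + A2). split; [lra|].
  intros x Hx. unfold Rpower.
  assert (Hp := exp_pos (r * ln (1 - Phi x))).
  assert (HL : exp (- x ^ 2 / (2 * u)) * Rabs x ^ k <= kf * exp (Rabs x - x ^ 2 / (2 * u))).
  { replace (Rabs x - x ^ 2 / (2 * u)) with (Rabs x + - x ^ 2 / (2 * u)) by (field; lra). rewrite exp_plus.
    pose proof (pow_le_fact_exp (Rabs x) k (Rabs_pos x)). rewrite RPow_abs.
    rewrite <- RPow_abs. pose proof (exp_pos (- x ^ 2 / (2 * u))). fold kf in H. nra. }
  destruct (Rle_or_lt x 0) as [Hx0|Hx0].
  -
    assert (Hh : / 2 <= 1 - Phi x).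
    { rewrite Phi_eq. assert (GF x <= 0) by (pose proof (GF_mono x 0 Hx0); rewrite GF0 in H; lra).
      apply (Rmult_le_reg_l (2 * s0)); [lra|]. field_simplify; lra. }
    assert (Hln : r * ln (/ 2) <= r * ln (1 - Phi x)).
    { apply Rmult_le_compat_l; [lra|]. apply ln_le; lra. }
    apply Rle_trans with (A1 * exp (r * ln (1 - Phi x))); [|nra].
    apply Rle_trans with (kf * exp (u / 2)).
    + apply Rle_trans with (1 := HL). apply Rmult_le_compat_l; [lra|]. apply exp_mono.
      rewrite Rabs_left1 by lra.
      replace (- x - x ^ 2 / (2 * u)) with (u / 2 - (x + u) ^ 2 / (2 * u)) by (field; lra).
      assert (0 <= (x + u) ^ 2 / (2 * u)) by (apply Rmult_le_pos; [apply pow2_ge_0| apply Rlt_le, Rinv_0_lt_compat; lra]). lra.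
    + unfold A1. rewrite Rmult_assoc. apply Rmult_le_compat_l; [lra|].
      rewrite <- exp_plus. apply exp_mono. lra.
  -
    assert (Hh := tail_lower x (Rlt_le _ _ Hx0)).
    assert (Hg : 0 < gf (x + 1) / (2 * s0)) by (apply Rdiv_lt_0_compat; [apply gf_pos|lra]).
    assert (Hln : r * ln (gf (x + 1) / (2 * s0)) <= r * ln (1 - Phi x)).
    { apply Rmult_le_compat_l; [lra|]. apply ln_le; lra. }
    rewrite ln_div in Hln by (try apply gf_pos; lra). unfold gf in Hln. rewrite ln_exp in Hln.
    apply Rle_trans with (A2 * exp (r * ln (1 - Phi x))); [|nra].
    apply Rle_trans with (1 := HL). unfold A2. rewrite Rmult_assoc. apply Rmult_le_compat_l; [lra|].
    rewrite <- exp_plus. apply exp_mono.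
    rewrite Rabs_right by lra.
    assert (Hb : d * b = 1 + r) by (unfold b; field; lra).
    assert (Hq : x - x ^ 2 / (2 * u) = x - x ^ 2 * (d + r) / 2).
    { unfold d. field. lra. }
    rewrite Hq. unfold E.
    assert (0 <= d * (x - b) ^ 2) by (apply Rmult_le_pos; [lra| apply pow2_ge_0]).
    nra.
Qed.

Ltac fld := field; repeat split; try (intro; lra); try lra.

Lemma tele a s : 2 <= a -> 1 < s ->
  (s - 1) * Rpower a (- s) <= Rpower (a - 1) (1 - s) - Rpower a (1 - s).
Proof.
  intros Ha Hs. unfold Rpower.
  assert (Hq : ln ((a - 1) / a) <= - / a).
  { pose proof (exp_ineq1_le (ln ((a - 1) / a))). rewrite exp_ln in H.
    - assert (Ea : (a - 1) / a = 1 - / a) by (field; intro; lra). rewrite Ea in H |- *. lra.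
    - apply Rdiv_lt_0_compat; lra. }
  rewrite ln_div in Hq by lra.
  set (L := ln a) in *. set (L1 := ln (a - 1)) in *.
  assert (E1 : exp ((1 - s) * L1) = exp ((1 - s) * L) * exp ((1 - s) * (L1 - L))).
  { rewrite <- exp_plus. f_equal. ring. }
  assert (E2 : exp (- s * L) = exp ((1 - s) * L) * / a).
  { replace (- s * L) with ((1 - s) * L + - L) by ring. rewrite exp_plus. f_equal.
    unfold L. rewrite exp_Ropp, exp_ln; lra. }
  pose proof (exp_ineq1_le ((1 - s) * (L1 - L))).
  assert (H2 : (s - 1) * / a <= (1 - s) * (L1 - L)) by nra.
  pose proof (exp_pos ((1 - s) * L)).
  rewrite E1, E2. nra.
Qed.

Definition pb (s : R) (n : nat) : R := Rpower (INR (S n)) (- s).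

Lemma pb_pos s n : 0 < pb s n.
Proof. apply exp_pos. Qed.

Lemma INR_S_pos n : 0 < INR (S n).
Proof. apply lt_0_INR; lia. Qed.

Lemma pb_partial s : 1 < s -> forall N,
  sum_f_R0 (pb s) N <= 1 + (1 - Rpower (INR (S N)) (1 - s)) / (s - 1).
Proof.
  intros Hs. induction N.
  - simpl. unfold pb. simpl. unfold Rpower. rewrite ln_1, !Rmult_0_r, exp_0.
    replace ((1 - 1) / (s - 1)) with 0 by (fld). lra.
  - simpl sum_f_R0. 
    assert (Ht := tele (INR (S (S N))) s).
    replace (INR (S (S N)) - 1) with (INR (S N)) in Ht by (rewrite (S_INR (S N)); ring).
    assert (2 <= INR (S (S N))) by (rewrite !S_INR; pose proof (pos_INR N); lra).
    specialize (Ht H Hs). unfold pb in *.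
    apply Rle_trans with (1 + (1 - Rpower (INR (S N)) (1 - s)) / (s - 1) + Rpower (INR (S (S N))) (- s)).
    + lra.
    + apply (Rmult_le_reg_l (s - 1)); [lra|]. field_simplify; [|intro; lra|intro;lra]. nra.
Qed.

Lemma pb_ex s : 1 < s -> ex_series (pb s).
Proof.
  intros Hs.
  assert (Hg : Un_growing (sum_f_R0 (pb s))).
  { intros n. simpl. pose proof (pb_pos s (S n)). lra. }
  assert (Hb : has_ub (sum_f_R0 (pb s))).
  { exists (1 + 1 / (s - 1)). intros x [n ->].
    apply Rle_trans with (1 := pb_partial s Hs n).
    assert (0 < Rpower (INR (S n)) (1 - s)) by apply exp_pos.
    apply Rplus_le_compat_l. unfold Rdiv. apply Rmult_le_compat_r.
    - apply Rlt_le, Rinv_0_lt_compat; lra.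
    - lra. }
  destruct (growing_cv _ Hg Hb) as [l Hl].
  exists l. apply is_series_Reals. exact Hl.
Qed.

Lemma rpow_nonneg x p : 0 <= rpow x p.
Proof. unfold rpow. destruct (Req_EM_T x 0). lra. apply Rlt_le, exp_pos. Qed.

Lemma moment_nonneg K (P : param K -> nat -> R) p th n :
  is_pmf_family P -> 0 <= moment_term P p th n.
Proof.
  intros hP. unfold moment_term. apply Rmult_le_pos; [apply rpow_nonneg|apply (proj1 (hP th))].
Qed.

Lemma tail_markov K (P : param K -> nat -> R) p th Mo :
  is_pmf_family P -> 0 < p -> ex_series (moment_term P p th) ->
  Series (moment_term P p th) <= Mo ->
  forall n, Rpower (INR (S n)) p * (1 - Ccdf P th n) <= Mo.
Proof.
  intros hP hp hex hle n.
  destruct (hP th) as [Hnn Hser].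
  assert (Ht : is_series (fun k => P th (S n + k)%nat) (1 - Ccdf P th n)).
  { apply (is_series_incr_n (K:=R_AbsRing) (V:=R_NormedModule)); [lia|].
    simpl pred. rewrite sum_n_Reals. unfold Ccdf, plus; simpl.
    replace (1 - sum_f_R0 (P th) n + sum_f_R0 (P th) n) with 1 by ring. exact Hser. }
  rewrite <- (is_series_unique _ _ Ht). rewrite <- Series_scal_l.
  apply Rle_trans with (Series (fun k => moment_term P p th (S n + k)%nat)).
  - apply Series_le.
    + intros k. split.
      * apply Rmult_le_pos; [apply Rlt_le, exp_pos | apply Hnn].
      * unfold moment_term, rpow. destruct (Req_EM_T (INR (S n + k)) 0) as [E|E].
        { exfalso. pose proof (INR_S_pos (n + k)). replace (S n + k)%nat with (S (n + k)) in E by lia. lra. }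
        apply Rmult_le_compat_r; [apply Hnn|].
        apply Rle_Rpower_l; [lra|]. split; [apply INR_S_pos|]. apply le_INR. lia.
    + apply (ex_series_incr_n (K:=R_AbsRing) (V:=R_NormedModule)). exact hex.
  - rewrite (Series_incr_n (moment_term P p th) (S n)) in hle; [|lia|exact hex].
    simpl pred in hle.
    pose proof (cond_pos_sum (moment_term P p th) n (fun m => moment_nonneg K P p th m hP)).
    lra.
Qed.

Lemma m_term_nonneg K (P : param K -> nat -> R) u k th n : 0 <= m_term P u k th n.
Proof.
  unfold m_term. destruct (Rlt_dec 0 _); [|lra]. destruct (Rlt_dec _ 1); [|lra].
  apply Rmult_le_pos.
  - apply Rlt_le, Rinv_0_lt_compat, sqrt_lt_R0. pose proof PI_RGT_0. lra.
  - apply Rmult_le_pos; [apply Rlt_le, exp_pos| apply pow_le, Rabs_pos].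
Qed.

Theorem mainTheorem8 (K : nat) (P : param K -> nat -> R) (hP : is_pmf_family P)
  (th_i : param K) (u p : R) (S : param K -> Prop)
  (hu : 0 < u) (hpu : u < p) (hS : is_open_param S) (hthS : S th_i)
  (hmom : exists M, forall th, S th ->
      ex_series (moment_term P p th) /\ Series (moment_term P p th) <= M) :
  forall k : nat, exists B, forall th, S th ->
      ex_series (m_term P u k th) /\ Series (m_term P u k th) <= B.
Proof.
  intros k. destruct hmom as [Mo HMo].
  assert (hp : 0 < p) by lra.
  set (r := (/ p + / u) / 2).
  assert (Hip : / p < / u) by (apply Rinv_lt_contravar; nra).
  assert (Hr : 0 < r) by (unfold r; pose proof (Rinv_0_lt_compat p hp); lra).
  assert (Hru : r * u < 1).
  { unfold r. replace ((/ p + / u) / 2 * u) with ((u / p + 1) / 2) by (field; split; intro; lra).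
    assert (u / p < 1). { apply (Rmult_lt_reg_r p); [lra|]. unfold Rdiv. rewrite Rmult_assoc, Rinv_l; lra. }
    lra. }
  set (s := p * r).
  assert (Hs : 1 < s).
  { unfold s, r. replace (p * ((/ p + / u) / 2)) with ((1 + p / u) / 2) by (field; split; intro; lra).
    assert (1 < p / u). { apply (Rmult_lt_reg_r u); [lra|]. unfold Rdiv. rewrite Rmult_assoc, Rinv_l; lra. }
    lra. }
  destruct (key_bound u r k hu Hr Hru) as [A [HA0 HA]].
  set (Mo' := Rmax Mo 1).
  assert (HMo' : 0 < Mo') by (unfold Mo'; pose proof (Rmax_r Mo 1); lra).
  set (C0 := / sqrt (2 * PI) * A * Rpower Mo' r).
  assert (HC0 : 0 <= C0).
  { unfold C0. apply Rmult_le_pos; [apply Rmult_le_pos; [|lra]|apply Rlt_le, exp_pos].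
    apply Rlt_le, Rinv_0_lt_compat, sqrt_lt_R0. pose proof PI_RGT_0. lra. }
  assert (Hbnd : forall th, S th -> forall n, m_term P u k th n <= C0 * pb s n).
  { intros th Hth n. destruct (HMo th Hth) as [Hex Hle].
    assert (Hmk := tail_markov K P p th Mo hP hp Hex Hle n).
    pose proof (pb_pos s n).
    unfold m_term. destruct (Rlt_dec 0 _) as [Hc0|]; [|nra]. destruct (Rlt_dec _ 1) as [Hc1|]; [|nra].
    set (c := Ccdf P th n) in *.
    assert (HQ : Phi (Qn P th n) = c) by (apply Phi_inv_spec; lra).
    assert (H1 : 0 < 1 - Phi (Qn P th n)) by lra.
    specialize (HA _ H1). rewrite HQ in HA.
    assert (Hsq : 0 < / sqrt (2 * PI)) by (apply Rinv_0_lt_compat, sqrt_lt_R0; pose proof PI_RGT_0; lra).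
    assert (HRp : 0 < Rpower (INR (Datatypes.S n)) p) by apply exp_pos.
    assert (Hc2 : 1 - c <= Mo' / Rpower (INR (Datatypes.S n)) p).
    { apply (Rmult_le_reg_l (Rpower (INR (Datatypes.S n)) p)); [lra|].
      unfold Rdiv. rewrite <- Rmult_assoc, (Rmult_comm _ Mo'), Rmult_assoc, Rinv_r by lra.
      pose proof (Rmax_l Mo 1). fold Mo' in H0. lra. }
    assert (Hc3 : Rpower (1 - c) r <= Rpower (Mo' / Rpower (INR (Datatypes.S n)) p) r).
    { apply Rle_Rpower_l; lra. }
    assert (Hc4 : Rpower (Mo' / Rpower (INR (Datatypes.S n)) p) r = Rpower Mo' r * pb s n).
    { unfold pb, Rpower at 1 2 4. rewrite ln_div by (try apply exp_pos; lra).
      unfold Rpower. rewrite ln_exp, <- exp_plus. f_equal. unfold s. ring. }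
    rewrite Hc4 in Hc3.
    unfold C0.
    assert (HRr : 0 <= Rpower (1 - c) r) by (apply Rlt_le, exp_pos).
    assert (HRm : 0 < Rpower Mo' r) by apply exp_pos.
    apply Rle_trans with (/ sqrt (2 * PI) * (A * Rpower (1 - c) r)).
    - apply Rmult_le_compat_l; lra.
    - rewrite !Rmult_assoc. apply Rmult_le_compat_l; [lra|]. apply Rmult_le_compat_l; [lra|]. lra. }
  exists (C0 * Series (pb s)). intros th Hth.
  assert (Hexb : ex_series (fun n => C0 * pb s n)).
  { apply (ex_series_scal_l (K:=R_AbsRing) (V:=R_NormedModule)). apply pb_ex; lra. }
  split.
  - apply (ex_series_le (K:=R_AbsRing) (V:=R_CompleteNormedModule)) with (fun n => C0 * pb s n); [|exact Hexb].
    intros n. unfold norm; simpl. unfold abs; simpl. rewrite Rabs_right.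
    + apply Hbnd; exact Hth.
    + apply Rle_ge, m_term_nonneg.
  - rewrite <- Series_scal_l. apply Series_le; [|exact Hexb].
    intros n. split; [apply m_term_nonneg|apply Hbnd; exact Hth].
Qed.
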